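(* Let $E$ be a real affine space of dimension $n$ with a system of coordinates $\mathcal L=(\ell_1,\dots,\ell_n)$, and let $\mathcal P,\mathcal Q$ be Yao-Yao partitions of $E$ adapted to $\mathcal L$, with centers $x$ and $y$ respectively. Suppose that for some $k<n$: $\mathcal P(\epsilon_1,\dots,\epsilon_k)=\mathcal Q(\epsilon_1,\dots,\epsilon_k)$ for all $(\epsilon_1,\dots,\epsilon_k)\in\{-1,1\}^k$, and there exists $(\epsilon'_1,\dots,\epsilon'_{k+1})\in\{-1,1\}^{k+1}$ with $\mathcal P(\epsilon'_1,\dots,\epsilon'_{k+1})\neq\mathcal Q(\epsilon'_1,\dots,\epsilon'_{k+1})$. If $x_{k+1}\ge y_{k+1}$, then there exist $\delta_1,\dots,\delta_k\in\{-1,1\}$ such that $\mathcal P(\delta_1,\dots,\delta_k,1)$ is strictly included in $\mathcal Q(\delta_1,\dots,\delta_k,1)$.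
   Context: $\vec E$ is the vector space of $E$. A partition of $E$ is a collection of subsets covering $E$ whose distinct members have disjoint interiors. Yao-Yao partitions and their centers are defined by induction on dimension: if $E=\{x\}$, the Yao-Yao partition is $\{\{x\}\}$, with center $x$; if $\dim E=n\ge1$, $\mathcal P$ is a Yao-Yao partition of $E$ with center $x$ if there exist an affine hyperplane $F$, a vector $v\in\vec E\setminus\vec F$ (the axis) and two Yao-Yao partitions $\mathcal P_1,\mathcal P_{-1}$ of $F$ with the same center $x$ such that $\mathcal P=\{A+\mathbb R_-v: A\in\mathcal P_{-1}\}\cup\{A+\mathbb R_+v: A\in\mathcal P_1\}$. A system of coordinates is a family $(\ell_1,\dots,\ell_n)$ of affine forms such that $x\mapsto(\ell_i(x))_i$ is a bijection $E\to\mathbb R^n$; write $x_i=\ell_i(x)$, $v_i=\vec\ell_i(v)$. A Yao-Yao partition given by $F,v,x,\mathcal P_1,\mathcal P_{-1}$ is adapted to $(\ell_1,\dots,\ell_n)$ if $F=\{z: z_1=x_1\}$ and $\mathcal P_1,\mathcal P_{-1}$ are adapted to the system $(\ell_2|_F,\dots,\ell_n|_F)$ of $F$ (in dimension $0$ every Yao-Yao partition is adapted). For an adapted partition one may take the axis normalized, $v_1=1$ (replacing $v$ by $v/v_1$, and exchanging $\mathcal P_1,\mathcal P_{-1}$ if $v_1<0$). With such a normalized presentation, define $\mathcal P(\emptyset)=E$ and, for $(\epsilon_1,\dots,\epsilon_k)\in\{-1,1\}^k$, $1\le k\le n$, recursively $\mathcal P(\epsilon_1,\dots,\epsilon_k)=\mathcal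 P_{\epsilon_1}(\epsilon_2,\dots,\epsilon_k)+\mathbb R_+(\epsilon_1 v)$, where $\mathcal P_{\epsilon_1}(\cdot)$ is the analogous object for the partition $\mathcal P_{\epsilon_1}$ of $F$ (with $\mathcal P_{\epsilon_1}(\emptyset)=F$). Then $\mathcal P=\{\mathcal P(\epsilon):\epsilon\in\{-1,1\}^n\}$. *)

(* Defs.v *)
From HB Require Import structures.
From mathcomp Require Import all_boot all_order all_algebra.
From mathcomp Require Import boolp classical_sets reals.
Set Implicit Arguments. Unset Strict Implicit. Unset Printing Implicit Defensive.
Import Order.TTheory GRing.Theory Num.Theory.
Local Open Scope ring_scope.
Local Open Scope classical_set_scope.

(* The affine space E of dimension n is identified, through the system of
   coordinates (l_1,...,l_n), with 'rV[R]_n; coordinate l_{i+1} is entry i.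
   A hyperplane F = {z | z_1 = c} is identified with 'rV[R]_n.-1 by dropping
   the first coordinate (this identification carries the restricted system
   (l_2|_F,...,l_n|_F) to the standard one). *)

Definition cons_row (R : ringType) (n : nat) (a : R) (z : 'rV[R]_n) : 'rV[R]_n.+1 :=
  \row_(i < n.+1) match unlift ord0 i with Some j => z 0 j | None => a end.

(* Normalized presentations of Yao-Yao partitions adapted to the coordinates.
   YYS c w P1 Pm1 : F = {z | z_1 = c}, axis v = (1, w) (so v_1 = 1),
   P1, Pm1 the Yao-Yao partitions of F (adapted presentations). *)
Inductive YY (R : realType) : nat -> Type :=
| YY0 : YY R 0
| YYS (n : nat) (c : R) (w : 'rV[R]_n) (P1 Pm1 : YY R n) : YY R n.+1.

Arguments YY0 {R}.

Fixpoint center (R : realType) (n : nat) (P : YY R n) : 'rV[R]_n :=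
  match P with
  | YY0 => 0
  | YYS _ c _ P1 _ => cons_row c (center P1)
  end.

Fixpoint wfYY (R : realType) (n : nat) (P : YY R n) : Prop :=
  match P with
  | YY0 => True
  | YYS _ _ _ P1 Pm1 => [/\ center P1 = center Pm1, wfYY P1 & wfYY Pm1]
  end.

Definition sgnb (R : ringType) (b : bool) : R := if b then 1 else -1.

Fixpoint cell (R : realType) (n : nat) (P : YY R n) (e : seq bool) : set 'rV[R]_n :=
  match P with
  | YY0 => setT
  | YYS m c w P1 Pm1 =>
      match e with
      | [::] => setT
      | b :: es =>
          [set z | exists2 z' : 'rV[R]_m, cell (if b then P1 else Pm1) es z' &
                   exists2 t : R, 0 <= t &
                     z = cons_row c z' + (t * sgnb R b) *: cons_row 1 w]
      end
  end.

(* Main.v *)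
Require Import Defs.
From HB Require Import structures.
From mathcomp Require Import all_boot all_order all_algebra.
From mathcomp Require Import boolp classical_sets reals.
From mathcomp Require Import ring lra.
Import Order.TTheory GRing.Theory Num.Theory.
Local Open Scope ring_scope.
Local Open Scope classical_set_scope.

Set Implicit Arguments. Unset Strict Implicit. Unset Printing Implicit Defensive.
Section S.
Variable R : realType.

Definition hd n (y : 'rV[R]_n.+1) : R := y 0 ord0.
Definition tl n (y : 'rV[R]_n.+1) : 'rV[R]_n := \row_j y 0 (lift ord0 j).

Lemma cons0 n (a : R) (z : 'rV[R]_n) : (cons_row a z) ord0 ord0 = a.
Proof. by rewrite mxE unlift_none. Qed.
Lemma consS n (a : R) (z : 'rV[R]_n) j : (cons_row a z) ord0 (lift ord0 j) = z ord0 j.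
Proof. by rewrite mxE liftK. Qed.
Lemma hd_cons n (a : R) (z : 'rV[R]_n) : hd (cons_row a z) = a.
Proof. exact: cons0. Qed.
Lemma tl_cons n (a : R) (z : 'rV[R]_n) : tl (cons_row a z) = z.
Proof. by apply/rowP => j; rewrite mxE consS. Qed.
Lemma row_split n (y : 'rV[R]_n.+1) : y = cons_row (hd y) (tl y).
Proof.
apply/rowP => i; rewrite mxE; case: unliftP => [j ->|->]; by rewrite ?mxE.
Qed.
Lemma cons_lin n (a b r : R) (z z' : 'rV[R]_n) :
  cons_row a z + r *: cons_row b z' = cons_row (a + r * b) (z + r *: z').
Proof.
apply/rowP => i; rewrite !mxE; case: unliftP => [j _|_]; by rewrite ?mxE.
Qed.

Definition pj n (c : R) (w : 'rV[R]_n) (z : 'rV[R]_n.+1) := tl z - (hd z - c) *: w.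

Lemma cell_nil n (P : YY R n) : cell P [::] = setT.
Proof. by case: P. Qed.

Lemma cellS n c (w : 'rV[R]_n) P1 Pm1 b es z :
  cell (YYS c w P1 Pm1) (b :: es) z <->
  0 <= sgnb R b * (hd z - c) /\ cell (if b then P1 else Pm1) es (pj c w z).
Proof.
split.
  case=> z' hz' [t t0 ->].
  rewrite cons_lin /pj hd_cons tl_cons.
  have -> : c + t * sgnb R b * 1 - c = t * sgnb R b by ring.
  rewrite addrK; split => //.
  have -> : sgnb R b * (t * sgnb R b) = t by case: (b) => /=; ring.
  done.
move=> [h1 h2]; exists (pj c w z) => //.
exists (sgnb R b * (hd z - c)) => //.
have -> : sgnb R b * (hd z - c) * sgnb R b = hd z - c by case: (b) => /=; ring.
rewrite cons_lin /pj subrK.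
have -> : c + (hd z - c) * 1 = hd z by ring.
exact: row_split.
Qed.


Lemma tlE n (y : 'rV[R]_n.+1) j : tl y 0 j = y 0 (lift ord0 j).
Proof. by rewrite mxE. Qed.

Lemma pj_cons n c (w : 'rV[R]_n) u a : pj c w (cons_row (c + u) a) = a - u *: w.
Proof. by rewrite /pj hd_cons tl_cons addrAC subrr add0r. Qed.

Lemma pj_cons0 n c (w : 'rV[R]_n) a : pj c w (cons_row c a) = a.
Proof. by rewrite /pj hd_cons tl_cons subrr scale0r subr0. Qed.

Lemma center_hd n c (w : 'rV[R]_n) P1 Pm1 : center (YYS c w P1 Pm1) 0 ord0 = c.
Proof. exact: cons0. Qed.
Lemma center_tl n c (w : 'rV[R]_n) P1 Pm1 j :
  center (YYS c w P1 Pm1) 0 (lift ord0 j) = center P1 0 j.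
Proof. exact: consS. Qed.

Lemma cell_at_c n c (w : 'rV[R]_n) P1 Pm1 b es a :
  cell (YYS c w P1 Pm1) (b :: es) (cons_row c a) <-> cell (if b then P1 else Pm1) es a.
Proof.
rewrite cellS pj_cons0 hd_cons subrr mulr0; split => [[]|] //.
Qed.

Lemma cell1 n c (w : 'rV[R]_n) P1 Pm1 b z :
  cell (YYS c w P1 Pm1) [:: b] z <-> 0 <= sgnb R b * (hd z - c).
Proof. rewrite cellS cell_nil; split => [[]|] //. Qed.

Lemma cell_center n (P : YY R n) e : wfYY P -> cell P e (center P).
Proof.
elim: P e => [|m c w P1 IH1 Pm1 IHm1] e hw; first by [].
case: hw => eqc w1 wm; case: e => [|b es]; first by rewrite cell_nil.
change (center (YYS c w P1 Pm1)) with (cons_row c (center P1)).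
apply/cell_at_c; case: b; [exact: IH1 | rewrite eqc; exact: IHm1].
Qed.

Lemma cell_sub n (P : YY R n) d b : cell P (rcons d b) `<=` cell P d.
Proof.
elim: P d => [|m c w P1 IH1 Pm1 IHm1] d z; first by [].
case: d => [|b' d]; first by rewrite cell_nil.
rewrite rcons_cons => /cellS [h1 h2]; apply/cellS; split => //.
by case: b' h1 h2 => _ h2; [exact: IH1 h2 | exact: IHm1 h2].
Qed.

Lemma cell_dep n (P : YY R n) es (y y' : 'rV[R]_n) : cell P es y ->
  (forall i : 'I_n, (i < size es)%N -> y 0 i = y' 0 i) -> cell P es y'.
Proof.
elim: P es y y' => [|m c w P1 IH1 Pm1 IHm1] es y y' hy hag; first by [].
case: es hy hag => [|b es] hy hag; first by rewrite cell_nil.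
move/cellS: hy => [h1 h2].
have e0 : hd y = hd y' := hag ord0 erefl.
apply/cellS; rewrite -e0; split => //.
have hag' : forall i : 'I_m, (i < size es)%N -> pj c w y 0 i = pj c w y' 0 i.
  move=> i hi; rewrite /pj !mxE e0 (hag (lift ord0 i)) //.
by case: (b) h2 => h2; [exact: IH1 h2 hag' | exact: IHm1 h2 hag'].
Qed.

Lemma cell_inter n (P : YY R n) j y : (forall es, size es = j -> cell P es y) ->
  forall i : 'I_n, (i < j)%N -> y 0 i = center P 0 i.
Proof.
elim: P j y => [|m c w P1 IH1 Pm1 IHm1] j y hy i hi; first by case: (i).
case: j hy hi => [|j] hy hi //.
have /cellS [h1 _] := hy (true :: nseq j true) (congr1 S (size_nseq j true)).
have /cellS [h2 _] := hy (false :: nseq j true) (congr1 S (size_nseq j true)).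
rewrite /= in h1 h2.
have hc : hd y = c by lra.
have hpj : pj c w y = tl y by rewrite /pj hc subrr scale0r subr0.
have hT : forall es, size es = j -> cell P1 es (tl y).
  move=> es hes; have /cellS [_] := hy (true :: es) (congr1 S hes).
  by rewrite hpj.
case: (unliftP ord0 i) => [i' ei|ei]; rewrite ei.
  rewrite center_tl -(IH1 _ _ hT i'); first by rewrite tlE.
  by rewrite ei lift0 ltnS in hi.
by rewrite center_hd.
Qed.

Lemma cell_mono n (P : YY R n) d (y y' : 'rV[R]_n) :
  cell P (rcons d true) y -> cell P d y' ->
  (forall i : 'I_n, (i < size d)%N -> y 0 i = y' 0 i) ->
  (forall i : 'I_n, (i : nat) = size d -> y 0 i <= y' 0 i) ->
  cell P (rcons d true) y'.
Proof.
elim: P d y y' => [|m c w P1 IH1 Pm1 IHm1] d y y' hy hy' hag hle; first by [].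
case: d hy hy' hag hle => [|b d] hy hy' hag hle.
  move/cell1: hy => h1; apply/cell1.
  have := hle ord0 erefl; rewrite /= /hd in h1 *; lra.
rewrite rcons_cons in hy *.
move/cellS: hy => [h1 h2]; move/cellS: hy' => [h1' h2'].
apply/cellS; split => //.
have e0 : hd y = hd y' := hag ord0 erefl.
have hag' : forall i : 'I_m, (i < size d)%N -> pj c w y 0 i = pj c w y' 0 i.
  move=> i hi; rewrite /pj !mxE e0 (hag (lift ord0 i)) //.
have hle' : forall i : 'I_m, (i : nat) = size d -> pj c w y 0 i <= pj c w y' 0 i.
  move=> i hi; rewrite /pj !mxE e0 lerD2r; apply: hle.
  by rewrite lift0 /= hi.
by case: (b) h2 h2' => h2 h2'; [exact: IH1 h2 h2' hag' hle' | exact: IHm1 h2 h2' hag' hle'].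
Qed.

Lemma cell_below n (P : YY R n) d y : wfYY P -> cell P (rcons d true) y ->
  (forall i : 'I_n, (i < size d)%N -> y 0 i = center P 0 i) ->
  forall i : 'I_n, (i : nat) = size d -> center P 0 i <= y 0 i.
Proof.
elim: P d y => [|m c w P1 IH1 Pm1 IHm1] d y hw hy hag i hi; first by case: (i).
case: hw => eqc w1 wm.
case: d hy hag hi => [|b d] hy hag hi.
  have -> : i = ord0 by apply/val_inj.
  rewrite center_hd; move/cell1: hy; rewrite /= /hd; lra.
rewrite rcons_cons in hy; move/cellS: hy => [h1 h2].
have hc : hd y = c by rewrite /hd (hag ord0) // center_hd.
have hpj : pj c w y = tl y by rewrite /pj hc subrr scale0r subr0.
rewrite hpj in h2.
case: (unliftP ord0 i) => [i' ei|ei]; last by rewrite ei in hi.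
rewrite ei center_tl -tlE.
have hag' : forall j : 'I_m, (j < size d)%N -> tl y 0 j = center P1 0 j.
  move=> j hj; rewrite tlE (hag (lift ord0 j)) ?center_tl //.
have hi' : (i' : nat) = size d by move: hi; rewrite ei lift0 /= => -[].
case: (b) h2 => h2; first exact: IH1 w1 h2 hag' i' hi'.
rewrite eqc in hag' *; exact: IHm1 wm h2 hag' i' hi'.
Qed.


Definition MainStmt k := forall n (P Q : YY R n) (i : 'I_n), (i : nat) = k ->
  wfYY P -> wfYY Q ->
  (forall e : seq bool, size e = k -> cell P e = cell Q e) ->
  (exists e : seq bool, size e = k.+1 /\ cell P e <> cell Q e) ->
  center Q 0 i <= center P 0 i ->
  exists d : seq bool, size d = k /\
    cell P (rcons d true) `<=` cell Q (rcons d true) /\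
    cell P (rcons d true) <> cell Q (rcons d true).

Definition WeakStmt k := forall n (P Q : YY R n) (i : 'I_n), (i : nat) = k ->
  wfYY P -> wfYY Q ->
  (forall e : seq bool, size e = k -> cell P e = cell Q e) ->
  center Q 0 i <= center P 0 i ->
  exists d : seq bool, size d = k /\
    cell P (rcons d true) `<=` cell Q (rcons d true).

Lemma weak_main k : MainStmt k -> WeakStmt k.
Proof.
move=> H n P Q i hi wP wQ hag hc.
case: (pselect (exists e : seq bool, size e = k.+1 /\ cell P e <> cell Q e)) => [h|h].
  have [d [hd' [hinc _]]] := H n P Q i hi wP wQ hag h hc.
  by exists d.
exists (nseq k true); split; first by rewrite size_nseq.
have -> // : cell P (rcons (nseq k true) true) = cell Q (rcons (nseq k true) true).
apply: contrapT => hne; apply: h; exists (rcons (nseq k true) true).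
by rewrite size_rcons size_nseq.
Qed.

Lemma YYinv n (Q : YY R n) : match n return YY R n -> Prop with
  | 0 => fun _ => True
  | m.+1 => fun Q => exists c w Q1 Qm1, Q = @YYS R m c w Q1 Qm1 end Q.
Proof. by case: Q => [|m c w Q1 Qm1] //; exists c, w, Q1, Qm1. Qed.

Lemma step_neq k m (cP : R) (vP vQ : 'rV[R]_m) (P1 Pm1 Q1 Qm1 : YY R m)
    (i' : 'I_m) (b : bool) (d' : seq bool) :
  (i' : nat) = k -> size d' = k ->
  wfYY (if b then P1 else Pm1) -> wfYY (if b then Q1 else Qm1) ->
  (forall e, size e = k.+1 ->
     cell (YYS cP vP P1 Pm1) e = cell (YYS cP vQ Q1 Qm1) e) ->
  (forall j : 'I_m, (j < k)%N -> vP 0 j = vQ 0 j) ->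
  (forall j : 'I_m, (j < k)%N ->
     center (if b then P1 else Pm1) 0 j = center (if b then Q1 else Qm1) 0 j) ->
  center (if b then Q1 else Qm1) 0 i' <= center (if b then P1 else Pm1) 0 i' ->
  0 < sgnb R b * (vP 0 i' - vQ 0 i') ->
  cell (if b then P1 else Pm1) (rcons d' true) `<=`
    cell (if b then Q1 else Qm1) (rcons d' true) ->
  cell (YYS cP vP P1 Pm1) (b :: rcons d' true) `<=`
    cell (YYS cP vQ Q1 Qm1) (b :: rcons d' true) /\
  cell (YYS cP vP P1 Pm1) (b :: rcons d' true) <>
    cell (YYS cP vQ Q1 Qm1) (b :: rcons d' true).
Proof.
move=> hi' hd' wPb wQb hag hw hcen hc hpos hinc; split.
  move=> z /cellS [h1 h2]; apply/cellS; split => //.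
  have hz : cell (YYS cP vP P1 Pm1) (b :: d') z.
    by apply/cellS; split => //; exact: cell_sub h2.
  rewrite hag /= ?hd' // in hz; move/cellS: hz => [_ hz].
  apply: (cell_mono (hinc _ h2) hz).
    by move=> j hj; rewrite /pj !mxE hw // -hd'.
  move=> j hj.
  have -> : j = i' by apply/val_inj; rewrite /= hj hd' hi'.
  rewrite /pj !mxE.
  move: h1 hpos; case: (b) => /= h1 hpos; nra.
move=> heq.
set s := sgnb R b.
have hzQ : cell (YYS cP vQ Q1 Qm1) (b :: rcons d' true)
    (cons_row (cP + s) (center (if b then Q1 else Qm1) + s *: vQ)).
  apply/cellS; rewrite pj_cons addrK hd_cons; split; last exact: cell_center.
  by rewrite /s; case: (b) => /=; lra.
rewrite -heq in hzQ; move/cellS: hzQ => [_]; rewrite pj_cons => hP.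
have ag : forall j : 'I_m, (j < size d')%N ->
    (center (if b then Q1 else Qm1) + s *: vQ - s *: vP) 0 j =
    center (if b then P1 else Pm1) 0 j.
  by move=> j hj; rewrite !mxE hw -?hd' // hcen -?hd' // addrK.
have := cell_below wPb hP ag (etrans hi' (esym hd')); rewrite !mxE.
rewrite mulrBr in hpos; move: hpos hc; rewrite -/s; lra.
Qed.


Lemma mainP k : MainStmt k.
Proof.
elim: k => [|k IH] n P Q i hi wP wQ hag [e [he hne]] hc.
  destruct P as [|m cP vP P1 Pm1]; first by case: (i).
  have := YYinv Q; case=> cQ [vQ [Q1 [Qm1 eQ]]]; subst Q.
  have ei : i = ord0 by apply/val_inj.
  subst i; rewrite !center_hd in hc.
  case: e he hne => [|b [|]] //= _ hne.
  have hneq : cP != cQ.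
    apply/eqP => ecc; apply: hne; subst cQ.
    by apply/seteqP; split => z /cell1 h; apply/cell1.
  have hlt : cQ < cP by rewrite lt_neqAle hc eq_sym hneq.
  exists [::]; split => //; split.
    have H : forall z, cell (YYS cP vP P1 Pm1) [:: true] z ->
        cell (YYS cQ vQ Q1 Qm1) [:: true] z.
      by move=> z /cell1 h; apply/cell1; rewrite /= in h *; lra.
    exact: H.
  move=> heq.
  have hz : cell (YYS cQ vQ Q1 Qm1) [:: true] (cons_row cQ 0).
    by apply/cell1; rewrite hd_cons subrr mulr0.
  have e := f_equal (fun A : set _ => A (cons_row cQ 0)) heq.
  have hP : cell (YYS cP vP P1 Pm1) [:: true] (cons_row cQ 0) :=
    eq_ind_r (fun X : Prop => X) hz e.
  by move/cell1: hP; rewrite hd_cons /=; lra.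
destruct P as [|m cP vP P1 Pm1]; first by case: (i).
have := YYinv Q; case=> cQ [vQ [Q1 [Qm1 eQ]]]; subst Q.
case: (unliftP ord0 i) => [i' ei|ei]; last by rewrite ei in hi.
subst i.
have hi' : (i' : nat) = k by move: hi; rewrite lift0 => -[].
rewrite !center_tl in hc.
case: (wP) => ePc wP1 wPm1; case: (wQ) => eQc wQ1 wQm1.
have ecc : cP = cQ.
  have := cell_center (true :: nseq k true) wP.
  rewrite hag; last by rewrite /= size_nseq.
  move/cellS => [h1 _].
  have := cell_center (false :: nseq k true) wP.
  rewrite hag; last by rewrite /= size_nseq.
  move/cellS => [h2 _].
  rewrite /hd center_hd /= in h1 h2; lra.
subst cQ.
have hsub : forall b es, size es = k ->
    cell (if b then P1 else Pm1) es = cell (if b then Q1 else Qm1) es.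
  move=> b es hes; apply/seteqP; split => a ha.
    have h : cell (YYS cP vP P1 Pm1) (b :: es) (cons_row cP a) by apply/cell_at_c.
    by move: h; rewrite hag; [move/cell_at_c | rewrite /= hes].
  have h : cell (YYS cP vQ Q1 Qm1) (b :: es) (cons_row cP a) by apply/cell_at_c.
  by move: h; rewrite -hag; [move/cell_at_c | rewrite /= hes].
have wPb : forall b, wfYY (if b then P1 else Pm1) by case.
have wQb : forall b, wfYY (if b then Q1 else Qm1) by case.
have hcen : forall b (j : 'I_m), (j < k)%N ->
    center (if b then P1 else Pm1) 0 j = center (if b then Q1 else Qm1) 0 j.
  move=> b j hj.
  have hy : forall es, size es = k ->
      cell (if b then Q1 else Qm1) es (center (if b then P1 else Pm1)).
    by move=> es hes; rewrite -hsub //; apply: cell_center.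
  have := cell_inter hy hj. by [].
have hw : forall j : 'I_m, (j < k)%N -> vP 0 j = vQ 0 j.
  have hy : forall es, size es = k -> cell Q1 es (center P1 + vP - vQ).
    move=> es hes.
    have hz : cell (YYS cP vP P1 Pm1) (true :: es) (cons_row (cP + 1) (center P1 + vP)).
      apply/cellS; rewrite pj_cons scale1r addrK hd_cons; split.
        by rewrite /=; lra.
      exact: cell_center.
    move: hz; rewrite hag; last by rewrite /= hes.
    by move/cellS => [_]; rewrite pj_cons scale1r.
  move=> j hj; have := cell_inter hy hj; rewrite !mxE => h.
  have := hcen true j hj; rewrite /= => h'; lra.
have hccb : forall b, center (if b then Q1 else Qm1) 0 i' <=
    center (if b then P1 else Pm1) 0 i'.
  by case => //; rewrite -ePc -eQc.
case: (ltgtP (vQ 0 i') (vP 0 i')) => hv.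
- have [d' [hd' hinc]] := weak_main IH hi' wP1 wQ1 (hsub true) (hccb true).
  exists (true :: d'); split; first by rewrite /= hd'.
  rewrite rcons_cons.
  apply: (step_neq (b:=true) hi' hd' (wPb true) (wQb true) hag hw (hcen true) (hccb true) _ hinc).
  by rewrite /=; lra.
- have [d' [hd' hinc]] := weak_main IH hi' wPm1 wQm1 (hsub false) (hccb false).
  exists (false :: d'); split; first by rewrite /= hd'.
  rewrite rcons_cons.
  apply: (step_neq (b:=false) hi' hd' (wPb false) (wQb false) hag hw (hcen false) (hccb false) _ hinc).
  by rewrite /=; lra.
have hw' : forall j : 'I_m, (j < k.+1)%N -> vP 0 j = vQ 0 j.
  move=> j hj; rewrite ltnS leq_eqVlt in hj; case/orP: hj => [/eqP hj|hj].
    by have -> : j = i' by apply/val_inj; rewrite /= hj hi'.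
  exact: hw.
case: e he hne => [|b0 e'] //= /eqP; rewrite eqSS => /eqP he' hne.
have hne' : cell (if b0 then P1 else Pm1) e' <> cell (if b0 then Q1 else Qm1) e'.
  move=> heq; apply: hne; apply/seteqP; split => z /cellS [h1 h2]; apply/cellS;
    split => //; [rewrite -heq | rewrite heq]; apply: (cell_dep h2) => j hj;
    by rewrite /pj !mxE hw' // -he'.
have [d' [hd' [hinc hne2]]] := IH m _ _ i' hi' (wPb b0) (wQb b0) (hsub b0)
  (ex_intro _ e' (conj he' hne')) (hccb b0).
exists (b0 :: d'); split; first by rewrite /= hd'.
rewrite rcons_cons; split.
  move=> z /cellS [h1 h2]; apply/cellS; split => //.
  apply: (cell_dep (hinc _ h2)) => j hj.
  by rewrite size_rcons hd' in hj; rewrite /pj !mxE hw'.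
move=> heq; apply: hne2; apply/seteqP; split => // a ha.
have hz : cell (YYS cP vQ Q1 Qm1) (b0 :: rcons d' true) (cons_row cP a) by apply/cell_at_c.
have e := f_equal (fun A : set _ => A (cons_row cP a)) heq.
have hP : cell (YYS cP vP P1 Pm1) (b0 :: rcons d' true) (cons_row cP a) :=
  eq_ind_r (fun X : Prop => X) hz e.
by move/cell_at_c: hP.
Qed.

End S.

Theorem lemma9 (R : realType) (n k : nat) (hk : (k < n)%N) (P Q : YY R n) :
  wfYY P -> wfYY Q ->
  (forall e : seq bool, size e = k -> cell P e = cell Q e) ->
  (exists e : seq bool, size e = k.+1 /\ cell P e <> cell Q e) ->
  center Q 0 (Ordinal hk) <= center P 0 (Ordinal hk) ->
  exists d : seq bool, size d = k /\
    cell P (rcons d true) `<=` cell Q (rcons d true) /\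
    cell P (rcons d true) <> cell Q (rcons d true).
Proof.
move=> wP wQ hag hne hc.
exact: (@mainP R k n P Q (Ordinal hk) erefl wP wQ hag hne hc).
Qed.
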